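(* Let $\beta>0$ and let $S$ be a possible forest with vertex set $\{v_{s_1},\dots,v_{s_k}\}$, $s_1<\dots<s_k$. Then for every $t\ge s_k$, \[ \Pr(S\subset G^t_{1,\beta})=\frac{\beta}{d_S^{\mathrm{in}}(v_1)+\beta}\prod_{i:\,v_i\in V^-}\frac{\Gamma(1+d_S^{\mathrm{in}}(v_i)+\beta)}{\Gamma(1+\beta)}\prod_{(v_i,v_j)\in E(S),\ i>j}\frac{1}{(2+\beta)(i^{1+\beta}j)^{1/(2+\beta)}}\cdot\exp\!\left(O\!\left(\sum_{j=2}^{k}\frac{c_S(s_j)^2}{j-1}\right)\right), \] where the implied constant in the $O(\cdot)$ does not depend on $S$ or $t$.
   Context: Fix a real $\beta>0$ and a positive integer $m$. The random tree process $(G^n_{1,\beta})_{n\ge1}$ is defined as follows. $G^1_{1,\beta}$ consists of a single vertex $v_1$ and no edges. Given $G^n_{1,\beta}$ with vertices $v_1,\dots,v_n$ and directed edges $e_2,\dots,e_n$ (where $e_i$ is the edge whose tail is $v_i$), $G^{n+1}_{1,\beta}$ is obtained by adding a vertex $v_{n+1}$ and a directed edge $e_{n+1}$ with tail $v_{n+1}$ and head a ''target vertex'' determined by a random variable $f_{n+1}$, independent of $f_2,\dots,f_n$, taking values in $\Omega_{n+1}=\{(i,v):1\le i\le n\}\cup\{(i,h),(i,t):2\le i\le n\}$ with $\Pr(f_{n+1}=(i,v))=\beta/((2+\beta)n-2)$ and $\Pr(f_{n+1}=(i,h))=\Pr(f_{n+1}=(i,t))=1/((2+\beta)n-2)$.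 If $f_{n+1}=(i,v)$ the target is $v_i$ (chosen ''uniformly''); if $f_{n+1}=(i,h)$ the target is the head of $e_i$, and if $f_{n+1}=(i,t)$ the target is the tail $v_i$ of $e_i$ (chosen ''preferentially'', by copying the head half-edge, resp. tail half-edge, of $e_i$). Consequently the target is $v_i$ with probability $(d_n(v_i)+\beta)/((2+\beta)n-2)$, where $d_n(v)$ is the degree of $v$ in $G^n_{1,\beta}$. Each edge is regarded as two half-edges, one at each endpoint; the degree of a vertex is the number of half-edges at it (loops count twice). A possible forest is a directed forest $S$ whose vertices are labelled vertices $v_i$ of the process (identified by their index), with no isolated vertices, in which every vertex has out-degree $0$ or $1$, every edge $(v_i,v_j)$ has $i>j$, and $v_1$ (if present) has out-degree $0$. ''$S\subset G^t_{1,\beta}$'' means every edge $(v_i,v_j)$ of $S$ is an edge of $G^t_{1,\beta}$ (with labels matching). $d_S^{\mathrm{in}}(v)$ is the in-degree of $v$ in $S$ (taken to be $0$ if $v\notin V(S)$). $V^-=\{v_i\in V(S):\exists j>i,\ (v_j,v_i)\in E(S)\}$. For $t\ge i$, $R_t(i)=|\{j>t:(v_j,v_i)\in E(S)\}|$, and $c_S(i)=\sum_{k=1}^{i-1}R_{i-1}(k)$, i.e. the number of edges of $S$ from $\{v_i,v_{i+1},\dots\}$ to $\{v_1,\dots,v_{i-1}\}$. *)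

(* Defs.v *)
From Stdlib Require Import Reals Lra Lia Arith List.
Import ListNotations.
Open Scope R_scope.

Inductive choice : Type :=
| CV (i : nat)   (* (i,v) : target v_i, chosen uniformly   *)
| CH (i : nat)   (* (i,h) : target = head of e_i            *)
| CT (i : nat).  (* (i,t) : target = tail v_i of e_i        *)

(** Omega_{n+1}, where n is the current number of vertices. *)
Definition Omega (n : nat) : list choice :=
  map CV (seq 1 n) ++ map CH (seq 2 (n - 1)) ++ map CT (seq 2 (n - 1)).

(** Pr(f_{n+1} = c). *)
Definition weight (beta : R) (n : nat) (c : choice) : R :=
  match c with
  | CV _ => beta / ((2 + beta) * INR n - 2)
  | _ => 1 / ((2 + beta) * INR n - 2)
  end.

(** A graph of the process is encoded by its head function:
    [hd i] = index of the head of edge e_i (tail v_i), for 2 <= i <= n. *)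
Definition target (hd : nat -> nat) (c : choice) : nat :=
  match c with
  | CV i => i
  | CH i => hd i
  | CT i => i
  end.

Definition upd (hd : nat -> nat) (k v : nat) : nat -> nat :=
  fun x => if Nat.eqb x k then v else hd x.

Definition Rsum_list (l : list R) : R := fold_right Rplus 0 l.

(** [expect beta k n hd F]: expectation of F(head function) after k more
    steps, starting from a graph with n vertices and head function hd,
    with independent f_{n+1}, f_{n+2}, ... distributed as above. *)
Fixpoint expect (beta : R) (k n : nat) (hd : nat -> nat)
  (F : (nat -> nat) -> R) : R :=
  match k with
  | O => F hd
  | S k' =>
      Rsum_list (map (fun c =>
        weight beta n c * expect beta k' (S n) (upd hd (S n) (target hd c)) F)
        (Omega n))
  end.

(** * Possible forests: list of directed edges (i, j) meaning (v_i, v_j). *)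
Definition forest := list (nat * nat).

Definition possible_forest (S : forest) : Prop :=
  NoDup S /\
  (forall e, In e S -> (1 <= snd e)%nat /\ (snd e < fst e)%nat) /\
  NoDup (map fst S).  (* out-degree <= 1 *)

Definition contained (S : forest) (hd : nat -> nat) : bool :=
  forallb (fun e => Nat.eqb (hd (fst e)) (snd e)) S.

(** Pr(S ⊂ G^t_{1,beta}); G^1 has one vertex v_1 and no edges. *)
Definition prob_sub (beta : R) (S : forest) (t : nat) : R :=
  expect beta (t - 1) 1 (fun _ => O)
    (fun hd => if contained S hd then 1 else 0).

Definition inV (S : forest) (v : nat) : bool :=
  existsb (fun e => orb (Nat.eqb (fst e) v) (Nat.eqb (snd e) v)) S.

Definition smax (S : forest) : nat :=
  fold_right (fun e m => Nat.max (Nat.max (fst e) (snd e)) m) O S.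

(** sorted vertex list s_1 < ... < s_k *)
Definition verts (S : forest) : list nat :=
  filter (inV S) (seq 1 (smax S)).

Definition din (S : forest) (v : nat) : nat :=
  length (filter (fun e => Nat.eqb (snd e) v) S).

Definition Vminus (S : forest) : list nat :=
  filter (fun v => Nat.ltb 0 (din S v)) (seq 1 (smax S)).

Definition cS (S : forest) (i : nat) : nat :=
  length (filter (fun e => andb (Nat.leb i (fst e)) (Nat.ltb (snd e) i)) S).

(** Gamma(1 + d + beta) / Gamma(1 + beta) = prod_{m=1}^{d} (m + beta),
    for natural d (rising factorial). *)
Fixpoint gamma_ratio (beta : R) (d : nat) : R :=
  match d with
  | O => 1
  | S d' => gamma_ratio beta d' * (INR (S d') + beta)
  end.

Definition Rprod_list (l : list R) : R := fold_right Rmult 1 l.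

Definition main_term (beta : R) (S : forest) : R :=
  beta / (INR (din S 1) + beta) *
  Rprod_list (map (fun v => gamma_ratio beta (din S v)) (Vminus S)) *
  Rprod_list (map (fun e =>
     1 / ((2 + beta) *
          Rpower (Rpower (INR (fst e)) (1 + beta) * INR (snd e)) (1 / (2 + beta))))
     S).

(** sum_{j=2}^{k} c_S(s_j)^2 / (j-1); (nth j (verts S)) is s_{j+1}. *)
Definition err_sum (S : forest) : R :=
  let k := length (verts S) in
  Rsum_list (map (fun j => INR (cS S (nth j (verts S) O)) ^ 2 / INR j)
                 (seq 1 (k - 1))).

(* Main.v *)
Require Import Defs.
From Stdlib Require Import Reals List Lia Lra Arith.
Import ListNotations.
Open Scope R_scope.

Notation Rs f l := (Rsum_list (map f l)).

Lemma Rsum_app l1 l2 : Rsum_list (l1 ++ l2) = Rsum_list l1 + Rsum_list l2.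
Proof. induction l1; simpl; [lra|rewrite IHl1; lra]. Qed.

Lemma Rs_app {A} (f : A -> R) l1 l2 : Rs f (l1 ++ l2) = Rs f l1 + Rs f l2.
Proof. rewrite map_app, Rsum_app; reflexivity. Qed.

Lemma Rs_ext {A} (f g : A -> R) l : (forall x, In x l -> f x = g x) -> Rs f l = Rs g l.
Proof. intros H; rewrite (map_ext_in f g l H); reflexivity. Qed.

Lemma Rs_plus {A} (f g : A -> R) l : Rs (fun x => f x + g x) l = Rs f l + Rs g l.
Proof. induction l; simpl; [lra|rewrite IHl; lra]. Qed.

Lemma Rs_minus {A} (f g : A -> R) l : Rs (fun x => f x - g x) l = Rs f l - Rs g l.
Proof. induction l; simpl; [lra|rewrite IHl; lra]. Qed.

Lemma Rs_scal {A} c (f : A -> R) l : Rs (fun x => c * f x) l = c * Rs f l.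
Proof. induction l; simpl; [lra|rewrite IHl; lra]. Qed.

Lemma Rs_zero {A} (l : list A) : Rs (fun _ => 0) l = 0.
Proof. induction l; simpl; [lra|rewrite IHl; lra]. Qed.

Lemma Rs_le {A} (f g : A -> R) l : (forall x, In x l -> f x <= g x) -> Rs f l <= Rs g l.
Proof. induction l; simpl; intros H; [lra|].
  assert (f a <= g a) by auto. assert (Rs f l <= Rs g l) by auto. lra. Qed.

Lemma Rs_nonneg {A} (f : A -> R) l : (forall x, In x l -> 0 <= f x) -> 0 <= Rs f l.
Proof. intros H. rewrite <- (Rs_zero l). apply Rs_le; auto. Qed.

Lemma Rs_abs {A} (f : A -> R) l : Rabs (Rs f l) <= Rs (fun x => Rabs (f x)) l.
Proof. induction l; simpl. rewrite Rabs_R0; lra.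
  eapply Rle_trans; [apply Rabs_triang|]. lra. Qed.

Lemma Rs_exchange {A B} (F : A -> B -> R) l1 l2 :
  Rs (fun x => Rs (fun y => F x y) l2) l1 = Rs (fun y => Rs (fun x => F x y) l1) l2.
Proof.
  induction l1; simpl.
  - rewrite Rs_zero; reflexivity.
  - rewrite IHl1. rewrite <- Rs_plus. reflexivity.
Qed.

Lemma Rs_single {A} (f : A -> R) l w :
  NoDup l -> In w l -> (forall x, In x l -> x <> w -> f x = 0) -> Rs f l = f w.
Proof.
  induction l as [|a l IH]; simpl; intros Hnd Hin H; [contradiction|].
  inversion Hnd; subst. destruct Hin as [<-|Hin].
  - rewrite (Rs_ext f (fun _ => 0)). rewrite Rs_zero; lra.
    intros x Hx. apply H; auto. intro; subst; contradiction.
  - rewrite IH; auto. rewrite H; auto. lra. intro; subst; contradiction.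
Qed.

Lemma Rs_elem {A} (f : A -> R) l w : In w l -> (forall x, In x l -> 0 <= f x) -> f w <= Rs f l.
Proof.
  induction l as [|a l IH]; simpl; intros Hin H; [contradiction|].
  destruct Hin as [<-|Hin].
  - assert (0 <= Rs f l) by (apply Rs_nonneg; auto). lra.
  - assert (0 <= f a) by auto. assert (f w <= Rs f l) by auto. lra.
Qed.

Lemma INR_count {A} (p : A -> bool) l :
  INR (length (filter p l)) = Rs (fun x => if p x then 1 else 0) l.
Proof.
  induction l; [reflexivity|]. unfold Rsum_list in *. cbn [filter map fold_right]. destruct (p a).
  - cbn [length]. rewrite S_INR, IHl; lra.
  - rewrite IHl; lra.
Qed.

Lemma Rs_seq_ind (g : nat -> R) x a k :
  Rs (fun v => if Nat.eqb x v then g v else 0) (seq a k) =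
  if andb (Nat.leb a x) (Nat.ltb x (a + k)) then g x else 0.
Proof.
  revert a; induction k; intros a; simpl.
  - destruct (Nat.leb a x) eqn:E1; destruct (Nat.ltb x (a+0)) eqn:E2; simpl; auto.
    apply Nat.leb_le in E1; apply Nat.ltb_lt in E2; lia.
  - rewrite IHk. destruct (Nat.eqb x a) eqn:E.
    + apply Nat.eqb_eq in E; subst a.
      destruct (Nat.leb (S x) x) eqn:E1; [apply Nat.leb_le in E1; lia|]. simpl.
      rewrite Nat.leb_refl. replace (Nat.ltb x (x + S k)) with true; [simpl; lra|].
      symmetry; apply Nat.ltb_lt; lia.
    + apply Nat.eqb_neq in E.
      assert (Hb: ((a <=? x) && (x <? a + S k))%bool = ((S a <=? x) && (x <? S a + k))%bool).
      { apply Bool.eq_iff_eq_true. rewrite !Bool.andb_true_iff, !Nat.leb_le, !Nat.ltb_lt. lia. }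
      rewrite Hb; lra.
Qed.

Lemma Rs_interval (f : nat -> R) a n lo hi :
  (a <= lo)%nat -> (lo <= hi)%nat -> (hi <= a + n)%nat ->
  Rs (fun m => if andb (Nat.leb lo m) (Nat.ltb m hi) then f m else 0) (seq a n) =
  Rs f (seq lo (hi - lo)).
Proof.
  intros H1 H2 H3.
  replace n with ((lo - a) + ((hi - lo) + (a + n - hi)))%nat by lia.
  rewrite !seq_app, !Rs_app.
  rewrite (Rs_ext _ (fun _ => 0) (seq a (lo - a))).
  rewrite (Rs_ext _ (fun _ => 0) (seq (a + (lo - a) + (hi - lo)) _)).
  rewrite (Rs_ext _ f (seq (a + (lo - a)) (hi - lo))).
  rewrite !Rs_zero. replace (a + (lo - a))%nat with lo by lia. lra.
  - intros x Hx; apply in_seq in Hx.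
    replace (Nat.leb lo x && Nat.ltb x hi)%bool with true; auto.
    symmetry; apply Bool.andb_true_iff; rewrite Nat.leb_le, Nat.ltb_lt; lia.
  - intros x Hx; apply in_seq in Hx.
    replace (Nat.leb lo x && Nat.ltb x hi)%bool with false; auto.
    symmetry; apply Bool.andb_false_iff; right; apply Nat.ltb_ge; lia.
  - intros x Hx; apply in_seq in Hx.
    replace (Nat.leb lo x && Nat.ltb x hi)%bool with false; auto.
    symmetry; apply Bool.andb_false_iff; left; apply Nat.leb_gt; lia.
Qed.

Lemma Rs_telescope (g : nat -> R) a n :
  Rs (fun m => g (S m) - g m) (seq a n) = g (a + n)%nat - g a.
Proof.
  revert a; induction n; intros a; simpl.
  - rewrite Nat.add_0_r; lra.
  - rewrite IHn. replace (S a + n)%nat with (a + S n)%nat by lia. lra.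
Qed.

Lemma ln_le' x y : 0 < x -> x <= y -> ln x <= ln y.
Proof. intros H1 H2. destruct H2. left; apply ln_increasing; auto. subst; lra. Qed.

Lemma ln1p_upper x : 0 <= x -> ln (1 + x) <= x.
Proof.
  intros H. rewrite <- (ln_exp x) at 2. apply ln_le'. lra. apply exp_ineq1_le.
Qed.

Lemma ln1p_lower x : 0 <= x -> x - x * x <= ln (1 + x).
Proof.
  intros H. set (z := / (1 + x)).
  assert (Hz : 0 < z) by (unfold z; apply Rinv_0_lt_compat; lra).
  assert (ln z <= z - 1).
  { rewrite <- (ln_exp (z - 1)). apply ln_le'; auto. pose proof (exp_ineq1_le (z - 1)); lra. }
  unfold z in H0. rewrite ln_Rinv in H0 by lra.
  assert (x - x * x <= 1 - / (1 + x)).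
  { assert (/ (1 + x) * (1 + x) = 1) by (field; lra).
    assert (0 < / (1 + x)) by (apply Rinv_0_lt_compat; lra).
    assert ((x - x*x) * (1+x) <= (1 - /(1+x)) * (1 + x)).
    { replace ((1 - /(1+x)) * (1+x)) with (x) by (field; lra). nra. }
    apply Rmult_le_reg_r with (1 + x); lra. }
  lra.
Qed.

Definition Nn (b : R) (n : nat) : R := (2 + b) * INR n - 2.
Definition valid (n : nat) (hd : nat -> nat) :=
  forall i, (2 <= i <= n)%nat -> (1 <= hd i < i)%nat.
Definition cnt (n : nat) (hd : nat -> nat) (u : nat) : nat :=
  length (filter (fun i => Nat.eqb (hd i) u) (seq 2 (n - 1))).
Definition deg n hd u : nat := ((if Nat.leb 2 u then 1 else 0) + cnt n hd u)%nat.

Lemma Nn_pos b n : 0 < b -> (1 <= n)%nat -> 0 < Nn b n.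
Proof. intros Hb Hn. unfold Nn. apply le_INR in Hn. simpl in Hn. nra. Qed.

Lemma Nn_lower b n : 0 < b -> (1 <= n)%nat -> b * INR n / 2 <= Nn b n.
Proof. intros Hb Hn. unfold Nn. apply le_INR in Hn. simpl in Hn. nra. Qed.

Lemma Rs_map {A B} (f : B -> R) (g : A -> B) l : Rs f (map g l) = Rs (fun x => f (g x)) l.
Proof. rewrite map_map; reflexivity. Qed.

Lemma seq_1_n n : (1 <= n)%nat -> seq 1 n = 1%nat :: seq 2 (n - 1).
Proof. intros H. destruct n; [lia|]. simpl. rewrite Nat.sub_0_r; reflexivity. Qed.

Lemma Rs_seq_ind1 (g : nat -> R) x n :
  (1 <= x <= n)%nat -> Rs (fun v => if Nat.eqb x v then g v else 0) (seq 1 n) = g x.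
Proof.
  intros H. rewrite Rs_seq_ind. replace ((1 <=? x) && (x <? 1 + n))%bool with true; auto.
  symmetry; apply Bool.andb_true_iff; rewrite Nat.leb_le, Nat.ltb_lt; lia.
Qed.

Lemma sum_cnt_g n hd (g : nat -> R) : valid n hd -> (1 <= n)%nat ->
  Rs (fun v => INR (cnt n hd v) * g v) (seq 1 n) = Rs (fun i => g (hd i)) (seq 2 (n - 1)).
Proof.
  intros Hv Hn. unfold cnt.
  rewrite (Rs_ext _ (fun v => Rs (fun i => if Nat.eqb (hd i) v then g v else 0) (seq 2 (n-1)))).
  - rewrite Rs_exchange. apply Rs_ext. intros i Hi. apply in_seq in Hi.
    apply Rs_seq_ind1. specialize (Hv i). lia.
  - intros v _. rewrite INR_count. rewrite Rmult_comm, <- Rs_scal. apply Rs_ext.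
    intros i _. destruct (Nat.eqb (hd i) v); lra.
Qed.

Lemma ind2_sum (g : nat -> R) n : (1 <= n)%nat ->
  Rs (fun x => INR (if 2 <=? x then 1 else 0)%nat * g x) (seq 1 n) = Rs g (seq 2 (n - 1)).
Proof.
  intros Hn. rewrite (seq_1_n n Hn). cbn [map]. unfold Rsum_list at 1. cbn [fold_right].
  fold (Rsum_list (map (fun x => INR (if 2 <=? x then 1 else 0)%nat * g x) (seq 2 (n-1)))).
  rewrite (Rs_ext _ g). simpl; lra.
  intros x Hx; apply in_seq in Hx. replace (2 <=? x) with true. simpl; lra.
  symmetry; apply Nat.leb_le; lia.
Qed.

Lemma target_dist b n hd (g : nat -> R) : 0 < b -> valid n hd -> (1 <= n)%nat ->
  Rs (fun c => weight b n c * g (target hd c)) (Omega n) =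
  Rs (fun v => (INR (deg n hd v) + b) / Nn b n * g v) (seq 1 n).
Proof.
  intros Hb Hv Hn. unfold Omega. rewrite !Rs_app, !Rs_map.
  assert (HN : 0 < Nn b n) by (apply Nn_pos; auto).
  unfold deg.
  rewrite (Rs_ext (fun v => (INR ((if 2 <=? v then 1 else 0) + cnt n hd v)%nat + b) / Nn b n * g v) (fun v => b / Nn b n * g v + / Nn b n * (INR (if 2 <=? v then 1 else 0)%nat * g v)
       + / Nn b n * (INR (cnt n hd v) * g v))).
  2:{ intros v _. rewrite plus_INR. field. lra. }
  rewrite !Rs_plus, !Rs_scal. rewrite sum_cnt_g by auto.
  rewrite ind2_sum by auto.
  rewrite (Rs_ext (fun x => weight b n (CV x) * g x) (fun x => b / Nn b n * g x)) by (intros; reflexivity).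
  rewrite (Rs_ext (fun x => weight b n (CH x) * g (hd x)) (fun x => / Nn b n * g (hd x))).
  2:{ intros; simpl; unfold Rdiv; fold (Nn b n); lra. }
  rewrite (Rs_ext (fun x => weight b n (CT x) * g x) (fun x => / Nn b n * g x)).
  2:{ intros; simpl; unfold Rdiv; fold (Nn b n); lra. }
  rewrite !Rs_scal. simpl. lra.
Qed.

Definition rin (F : forest) n u : nat :=
  length (filter (fun e => andb (Nat.eqb (snd e) u) (Nat.ltb n (fst e))) F).
Fixpoint rising (D : R) (r : nat) : R :=
  match r with O => 1 | S r' => rising D r' * (D + INR r') end.
Definition sat (F : forest) n (hd : nat -> nat) : bool :=
  forallb (fun e => orb (negb (Nat.leb (fst e) n)) (Nat.eqb (hd (fst e)) (snd e))) F.
Definition Pf b F n hd : R :=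
  Rprod_list (map (fun u => rising (INR (deg n hd u) + b) (rin F n u)) (seq 1 (smax F))).
Definition Xf b F n hd : R := (if sat F n hd then 1 else 0) * Pf b F n hd.
Definition cc (F : forest) n : nat :=
  length (filter (fun e => andb (Nat.leb (snd e) n) (Nat.ltb n (fst e))) F).
Definition istail (F : forest) m : bool := existsb (fun e => Nat.eqb (fst e) m) F.
Definition Mf b F n : R :=
  if istail F (S n) then 1 / Nn b n else 1 + INR (cc F n) / Nn b n.

Lemma rising_pos D r : 0 < D -> 0 < rising D r.
Proof. intros H; induction r; simpl; [lra|]. apply Rmult_lt_0_compat; auto.
  pose proof (pos_INR r); lra. Qed.

Lemma rising_shift D r : rising (D + 1) r * D = rising D r * (D + INR r).
Proof.
  induction r; simpl. lra.
  replace (rising (D + 1) r * (D + 1 + INR r) * D) with (rising (D + 1) r * D * (D + 1 + INR r)) by ring.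
  rewrite IHr. destruct r; simpl; ring.
Qed.

Lemma smax_ge F e : In e F -> (fst e <= smax F)%nat /\ (snd e <= smax F)%nat.
Proof. induction F; simpl; intros H; [contradiction|]. destruct H as [<-|H]; [lia|].
  specialize (IHF H); lia. Qed.

Lemma Rprod_ext {A} (f g : A -> R) l : (forall x, In x l -> f x = g x) ->
  Rprod_list (map f l) = Rprod_list (map g l).
Proof. intros H; rewrite (map_ext_in f g l H); reflexivity. Qed.

Lemma Rprod_cons {A} (f : A -> R) a l : Rprod_list (map f (a :: l)) = f a * Rprod_list (map f l).
Proof. reflexivity. Qed.

Lemma Rprod_mod {A} (f g : A -> R) l w rho : NoDup l -> In w l ->
  (forall x, In x l -> x <> w -> g x = f x) -> g w = f w * rho ->
  Rprod_list (map g l) = Rprod_list (map f l) * rho.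
Proof.
  induction l as [|a l IH]; intros Hnd Hin H Hw; [contradiction|].
  inversion Hnd; subst. rewrite !Rprod_cons. destruct Hin as [<-|Hin].
  - rewrite Hw. rewrite (Rprod_ext g f). ring. intros x Hx; apply H. right; auto. intro; subst; contradiction.
  - rewrite IH; auto. rewrite H. ring. left; auto. intro; subst; contradiction.
    intros x Hx; apply H; right; auto.
Qed.

Lemma deg_upd n hd v u : (1 <= n)%nat -> valid n hd ->
  deg (S n) (upd hd (S n) v) u = (deg n hd u + if Nat.eqb v u then 1 else 0)%nat.
Proof.
  intros Hn Hv. unfold deg, cnt. replace (S n - 1)%nat with ((n - 1) + 1)%nat by lia.
  rewrite seq_app, filter_app, length_app.
  rewrite (filter_ext_in _ (fun i => Nat.eqb (hd i) u)).
  2:{ intros i Hi; apply in_seq in Hi. unfold upd. replace (Nat.eqb i (S n)) with false; auto.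
      symmetry; apply Nat.eqb_neq; lia. }
  replace (2 + (n - 1))%nat with (S n) by lia. simpl. unfold upd. rewrite Nat.eqb_refl.
  destruct (Nat.eqb v u); simpl; lia.
Qed.

Lemma valid_upd n hd v : valid n hd -> (1 <= v <= n)%nat -> valid (S n) (upd hd (S n) v).
Proof.
  intros Hv Hvn i Hi. unfold upd. destruct (Nat.eqb i (S n)) eqn:E.
  apply Nat.eqb_eq in E; lia. apply Nat.eqb_neq in E. apply Hv; lia.
Qed.

Lemma sat_iff F n hd : sat F n hd = true <->
  forall e, In e F -> (fst e <= n)%nat -> hd (fst e) = snd e.
Proof.
  unfold sat; rewrite forallb_forall. split; intros H e He.
  - intros Hle. specialize (H e He). apply Bool.orb_true_iff in H. destruct H as [H|H].
    apply Bool.negb_true_iff, Nat.leb_gt in H; lia. apply Nat.eqb_eq; auto.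
  - apply Bool.orb_true_iff. destruct (Nat.leb (fst e) n) eqn:E.
    right. apply Nat.eqb_eq, H; auto. apply Nat.leb_le; auto. left; reflexivity.
Qed.

Lemma sum_deg n hd b : valid n hd -> (1 <= n)%nat ->
  Rs (fun v => INR (deg n hd v) + b) (seq 1 n) = Nn b n.
Proof.
  intros Hv Hn. unfold deg.
  rewrite (Rs_ext _ (fun v => INR (if 2 <=? v then 1 else 0)%nat * 1 + INR (cnt n hd v) * 1 + b)).
  2:{ intros; rewrite plus_INR; ring. }
  rewrite !Rs_plus. rewrite ind2_sum, sum_cnt_g by auto.
  assert (forall l : list nat, Rs (fun _ => 1) l = INR (length l)).
  { induction l; simpl; auto. unfold Rsum_list in *; simpl. rewrite IHl. destruct (length l); simpl; lra. }
  assert (forall l : list nat, Rs (fun _ => b) l = b * INR (length l)).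
  { induction l; simpl. unfold Rsum_list; simpl; lra. unfold Rsum_list in *; simpl. rewrite IHl.
    destruct (length l); simpl; lra. }
  rewrite !H, H0, !length_seq. unfold Nn. rewrite minus_INR by auto. simpl. ring.
Qed.

Lemma sum_rin F n : possible_forest F ->
  Rs (fun v => INR (rin F n v)) (seq 1 n) = INR (cc F n).
Proof.
  intros [_ [Hf _]]. unfold rin, cc.
  rewrite (Rs_ext _ (fun v => Rs (fun e => if Nat.eqb (snd e) v then (if Nat.ltb n (fst e) then 1 else 0) else 0) F)).
  2:{ intros v _. rewrite INR_count. apply Rs_ext. intros e _.
      destruct (Nat.eqb (snd e) v); destruct (Nat.ltb n (fst e)); reflexivity. }
  rewrite Rs_exchange, INR_count. apply Rs_ext. intros e He.
  rewrite Rs_seq_ind. specialize (Hf e He).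
  destruct (Nat.leb (snd e) n) eqn:E1.
  - apply Nat.leb_le in E1. replace ((1 <=? snd e) && (snd e <? 1 + n))%bool with true. reflexivity.
    symmetry; apply Bool.andb_true_iff; rewrite Nat.leb_le, Nat.ltb_lt; lia.
  - apply Nat.leb_gt in E1. replace ((1 <=? snd e) && (snd e <? 1 + n))%bool with false. reflexivity.
    symmetry; apply Bool.andb_false_iff; right; apply Nat.ltb_ge; lia.
Qed.

Lemma tail_unique (F : forest) a c : NoDup (map fst F) -> In (a, c) F ->
  forall e, In e F -> fst e = a -> e = (a, c).
Proof.
  induction F as [|x l IH]; simpl; intros Hnd Hin e He Hfe; [contradiction|].
  inversion Hnd as [|x0 l0 Hni Hnd']. subst x0 l0.
  destruct Hin as [Hx|Hin]; destruct He as [He|He].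
  - congruence.
  - exfalso. apply Hni. rewrite Hx. simpl. rewrite <- Hfe. apply in_map; auto.
  - exfalso. apply Hni. rewrite He, Hfe. change a with (fst (a, c)). apply in_map; auto.
  - apply IH; auto.
Qed.

Lemma istail_false F m : istail F m = false -> forall e, In e F -> fst e <> m.
Proof.
  intros H e He Heq. unfold istail in H. assert (existsb (fun e => Nat.eqb (fst e) m) F = true).
  apply existsb_exists. exists e; split; auto. apply Nat.eqb_eq; auto. congruence.
Qed.

Lemma istail_true F m : istail F m = true -> exists w, In (m, w) F.
Proof.
  intros H. unfold istail in H. apply existsb_exists in H. destruct H as [[x y] [H1 H2]].
  apply Nat.eqb_eq in H2. simpl in H2; subst. eauto.
Qed.

Lemma rin_big F n v : (smax F < v)%nat -> rin F n v = 0%nat.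
Proof.
  intros H. unfold rin. rewrite (filter_ext_in _ (fun _ => false)). clear H.
  induction F; simpl; auto.
  intros e He. destruct (smax_ge F e He). replace (Nat.eqb (snd e) v) with false; auto.
  symmetry; apply Nat.eqb_neq; lia.
Qed.

Lemma Pf_upd b F n hd v : 0 < b -> (1 <= n)%nat -> valid n hd -> (1 <= v)%nat ->
  (forall u, rin F (S n) u = rin F n u) ->
  Pf b F (S n) (upd hd (S n) v) =
  Pf b F n hd * ((INR (deg n hd v) + b + INR (rin F n v)) / (INR (deg n hd v) + b)).
Proof.
  intros Hb Hn Hv Hv1 Hr. unfold Pf.
  assert (HD : 0 < INR (deg n hd v) + b) by (pose proof (pos_INR (deg n hd v)); lra).
  destruct (le_lt_dec v (smax F)) as [Hvm|Hvm].
  - apply Rprod_mod with v. apply seq_NoDup. apply in_seq; lia.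
      * intros u _ Hu. rewrite deg_upd, Hr by auto. replace (Nat.eqb v u) with false.
        rewrite Nat.add_0_r; reflexivity. symmetry; apply Nat.eqb_neq; auto.
      * rewrite deg_upd, Hr by auto. rewrite Nat.eqb_refl, plus_INR.
        set (D := INR (deg n hd v) + b). replace (INR (deg n hd v) + INR 1 + b) with (D + 1) by (unfold D; simpl; ring).
        apply Rmult_eq_reg_r with D; [|unfold D; lra].
        rewrite rising_shift. field. unfold D; lra.
  - rewrite (rin_big F n v Hvm). simpl. replace ((INR (deg n hd v) + b + 0) / (INR (deg n hd v) + b)) with 1 by (field; lra).
    rewrite Rmult_1_r. apply Rprod_ext. intros u Hu. apply in_seq in Hu.
    rewrite deg_upd, Hr by auto. replace (Nat.eqb v u) with false.
    rewrite Nat.add_0_r; reflexivity. symmetry; apply Nat.eqb_neq; lia.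
Qed.

Lemma rin_split F n u : INR (rin F n u) =
  INR (rin F (S n) u) + Rs (fun e => if andb (Nat.eqb (snd e) u) (Nat.eqb (fst e) (S n)) then 1 else 0) F.
Proof.
  unfold rin. rewrite !INR_count, <- Rs_plus. apply Rs_ext. intros e _.
  destruct (Nat.eqb (snd e) u); simpl; [|lra].
  destruct (Nat.ltb_spec n (fst e)); destruct (Nat.ltb_spec (S n) (fst e));
  destruct (Nat.eqb_spec (fst e) (S n)); simpl; try lra; exfalso; lia.
Qed.

Lemma rin_B F n u : istail F (S n) = false -> rin F (S n) u = rin F n u.
Proof.
  intros H. apply INR_eq. rewrite (rin_split F n u).
  rewrite (Rs_ext _ (fun _ => 0)). rewrite Rs_zero; lra.
  intros e He. pose proof (istail_false F (S n) H e He).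
  replace (Nat.eqb (fst e) (S n)) with false. destruct (Nat.eqb (snd e) u); reflexivity.
  symmetry; apply Nat.eqb_neq; auto.
Qed.

Lemma rin_A F n w u : possible_forest F -> In (S n, w) F ->
  INR (rin F n u) = INR (rin F (S n) u) + if Nat.eqb w u then 1 else 0.
Proof.
  intros [Hnd [_ Hnf]] Hin. rewrite (rin_split F n u). f_equal.
  rewrite (Rs_single _ F (S n, w)); auto. simpl. rewrite Nat.eqb_refl.
  destruct (Nat.eqb w u); reflexivity.
  intros e He Hne. destruct (Nat.eqb (fst e) (S n)) eqn:E.
  - apply Nat.eqb_eq in E. exfalso; apply Hne. eapply tail_unique; eauto.
  - destruct (Nat.eqb (snd e) u); reflexivity.
Qed.

Lemma Pf_updA b F n hd w : 0 < b -> (1 <= n)%nat -> valid n hd -> (1 <= w <= smax F)%nat ->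
  (forall u, u <> w -> rin F (S n) u = rin F n u) -> rin F n w = S (rin F (S n) w) ->
  Pf b F (S n) (upd hd (S n) w) = Pf b F n hd * / (INR (deg n hd w) + b).
Proof.
  intros Hb Hn Hv Hw Hr Hrw. unfold Pf.
  assert (HD : 0 < INR (deg n hd w) + b) by (pose proof (pos_INR (deg n hd w)); lra).
  apply Rprod_mod with w. apply seq_NoDup. apply in_seq; lia.
  - intros u _ Hu. rewrite deg_upd, Hr by auto. replace (Nat.eqb w u) with false.
    rewrite Nat.add_0_r; reflexivity. symmetry; apply Nat.eqb_neq; auto.
  - rewrite deg_upd by auto. rewrite Nat.eqb_refl, plus_INR, Hrw.
    set (D := INR (deg n hd w) + b). replace (INR (deg n hd w) + INR 1 + b) with (D + 1) by (unfold D; simpl; ring).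
    cbn [rising]. apply Rmult_eq_reg_r with D; [|unfold D; lra].
    rewrite rising_shift. field. unfold D; lra.
Qed.

Lemma satB F n hd v : istail F (S n) = false ->
  sat F (S n) (upd hd (S n) v) = sat F n hd.
Proof.
  intros H. apply Bool.eq_iff_eq_true. rewrite !sat_iff. split; intros Hs e He Hle.
  - pose proof (istail_false F (S n) H e He). rewrite <- Hs; auto. unfold upd.
    replace (Nat.eqb (fst e) (S n)) with false; auto. symmetry; apply Nat.eqb_neq; lia.
  - pose proof (istail_false F (S n) H e He). unfold upd.
    replace (Nat.eqb (fst e) (S n)) with false. apply Hs; auto; lia. symmetry; apply Nat.eqb_neq; lia.
Qed.

Lemma satA F n hd v w : possible_forest F -> In (S n, w) F ->
  sat F (S n) (upd hd (S n) v) = andb (sat F n hd) (Nat.eqb v w).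
Proof.
  intros [Hnd [Hf Hnf]] Hin. apply Bool.eq_iff_eq_true. rewrite Bool.andb_true_iff, !sat_iff, Nat.eqb_eq.
  split.
  - intros Hs. split.
    + intros e He Hle. specialize (Hs e He ltac:(lia)). unfold upd in Hs.
      replace (Nat.eqb (fst e) (S n)) with false in Hs; auto. symmetry; apply Nat.eqb_neq; lia.
    + specialize (Hs _ Hin ltac:(simpl; lia)). unfold upd in Hs. simpl in Hs.
      rewrite Nat.eqb_refl in Hs. auto.
  - intros [Hs ->] e He Hle. unfold upd. destruct (Nat.eqb_spec (fst e) (S n)).
    + rewrite (tail_unique F (S n) w Hnf Hin e He e0). reflexivity.
    + apply Hs; auto; lia.
Qed.

Lemma step b F n hd : 0 < b -> possible_forest F -> (1 <= n)%nat -> valid n hd ->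
  Rs (fun c => weight b n c * Xf b F (S n) (upd hd (S n) (target hd c))) (Omega n) =
  Xf b F n hd * Mf b F n.
Proof.
  intros Hb HF Hn Hv.
  etransitivity. apply (target_dist b n hd (fun v => Xf b F (S n) (upd hd (S n) v))); auto.
  assert (HN : 0 < Nn b n) by (apply Nn_pos; auto).
  unfold Mf. destruct (istail F (S n)) eqn:Et.
  - destruct (istail_true F (S n) Et) as [w Hw].
    destruct HF as [Hnd [Hf Hnf]] eqn:HF'. pose proof (Hf _ Hw) as Hw1. simpl in Hw1.
    pose proof (smax_ge F _ Hw) as Hw2. simpl in Hw2.
    rewrite (Rs_single _ _ w). 2: apply seq_NoDup. 2: apply in_seq; lia.
    + unfold Xf. rewrite (satA F n hd w w HF Hw), Nat.eqb_refl, Bool.andb_true_r.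
      rewrite (Pf_updA b F n hd w); auto; try lia.
      * assert (0 < INR (deg n hd w) + b) by (pose proof (pos_INR (deg n hd w)); lra).
        field. lra.
      * intros u Hu. apply INR_eq. rewrite (rin_A F n w u HF Hw).
        replace (Nat.eqb w u) with false. lra. symmetry; apply Nat.eqb_neq; auto.
      * apply INR_eq. rewrite (rin_A F n w w HF Hw), Nat.eqb_refl, S_INR. lra.
    + intros v Hv' Hvw. unfold Xf. rewrite (satA F n hd v w HF Hw).
      replace (Nat.eqb v w) with false. rewrite Bool.andb_false_r. lra.
      symmetry; apply Nat.eqb_neq; auto.
  - unfold Xf at 2. set (s := if sat F n hd then 1 else 0).
    rewrite (Rs_ext _ (fun v => s * Pf b F n hd / Nn b n * ((INR (deg n hd v) + b) + INR (rin F n v)))).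
    2:{ intros v Hv'. apply in_seq in Hv'. unfold Xf. rewrite satB by auto. fold s.
        rewrite Pf_upd; auto; try lia. 2: intros; apply rin_B; auto.
        assert (0 < INR (deg n hd v) + b) by (pose proof (pos_INR (deg n hd v)); lra).
        field. lra. }
    rewrite Rs_scal, Rs_plus, sum_deg, sum_rin by auto. field. lra.
Qed.

Lemma target_range n hd c : valid n hd -> In c (Omega n) -> (1 <= target hd c <= n)%nat.
Proof.
  intros Hv Hc. unfold Omega in Hc. rewrite !in_app_iff, !in_map_iff in Hc.
  destruct Hc as [[i [<- Hi]]|[[i [<- Hi]]|[i [<- Hi]]]]; apply in_seq in Hi; simpl; try lia.
  specialize (Hv i ltac:(lia)). lia.
Qed.

Lemma expect_X b F k : forall n hd, 0 < b -> possible_forest F -> (1 <= n)%nat -> valid n hd ->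
  expect b k n hd (Xf b F (n + k)) = Xf b F n hd * Rprod_list (map (Mf b F) (seq n k)).
Proof.
  induction k; intros n hd Hb HF Hn Hv.
  - simpl. rewrite Nat.add_0_r. unfold Rprod_list; simpl; ring.
  - cbn [expect]. replace (n + S k)%nat with (S n + k)%nat by lia.
    rewrite (Rs_ext _ (fun c => (weight b n c * Xf b F (S n) (upd hd (S n) (target hd c))) *
         Rprod_list (map (Mf b F) (seq (S n) k)))).
    2:{ intros c Hc. rewrite IHk; auto. ring. apply valid_upd; auto. apply target_range; auto. }
    rewrite (Rs_ext _ (fun c => Rprod_list (map (Mf b F) (seq (S n) k)) *
         (weight b n c * Xf b F (S n) (upd hd (S n) (target hd c))))) by (intros; ring).
    rewrite Rs_scal, step by auto. cbn [seq]. rewrite Rprod_cons. ring.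
Qed.

Lemma Xf_final b F t hd : possible_forest F -> (smax F <= t)%nat ->
  Xf b F t hd = if contained F hd then 1 else 0.
Proof.
  intros HF Ht. unfold Xf, Pf.
  rewrite (Rprod_ext _ (fun _ => 1)).
  2:{ intros u _. replace (rin F t u) with 0%nat; auto. unfold rin.
      rewrite (filter_ext_in _ (fun _ => false)). clear. induction F; simpl; auto.
      intros e He. destruct (smax_ge F e He). replace (Nat.ltb t (fst e)) with false.
      apply Bool.andb_false_r. symmetry; apply Nat.ltb_ge; lia. }
  replace (Rprod_list (map (fun _ : nat => 1) (seq 1 (smax F)))) with 1.
  2:{ generalize (seq 1 (smax F)). induction l; auto. rewrite Rprod_cons, <- IHl; ring. }
  replace (sat F t hd) with (contained F hd). destruct (contained F hd); ring.
  apply Bool.eq_iff_eq_true. rewrite sat_iff. unfold contained. rewrite forallb_forall.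
  split; intros H e He.
  - intros _. apply Nat.eqb_eq, H; auto.
  - apply Nat.eqb_eq, H; auto. destruct (smax_ge F e He); lia.
Qed.

Lemma expect_ext b k : forall n hd (F1 F2 : (nat -> nat) -> R), (forall h, F1 h = F2 h) ->
  expect b k n hd F1 = expect b k n hd F2.
Proof.
  induction k; intros n hd F1 F2 H; simpl; auto.
  f_equal. apply map_ext. intros c. f_equal. apply IHk; auto.
Qed.

Lemma rising_b b d : 0 < b -> rising b d = b / (INR d + b) * gamma_ratio b d.
Proof.
  intros Hb. induction d. simpl. field. lra.
  cbn [rising gamma_ratio]. rewrite IHd. rewrite S_INR.
  pose proof (pos_INR d). field. lra.
Qed.

Lemma rising_1b b d : rising (1 + b) d = gamma_ratio b d.
Proof.
  induction d; simpl; auto. rewrite IHd. f_equal. destruct d; simpl; ring.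
Qed.

Lemma Rprod_filter {A} (p : A -> bool) (g : A -> R) l :
  Rprod_list (map g (filter p l)) = Rprod_list (map (fun x => if p x then g x else 1) l).
Proof.
  induction l; [reflexivity|]. rewrite Rprod_cons. simpl filter. destruct (p a).
  - rewrite Rprod_cons, IHl; auto.
  - rewrite IHl; ring.
Qed.

Lemma din_big F v : (smax F < v)%nat -> din F v = 0%nat.
Proof.
  intros H. unfold din. rewrite (filter_ext_in _ (fun _ => false)). clear H.
  induction F; simpl; auto.
  intros e He. destruct (smax_ge F e He). apply Nat.eqb_neq; lia.
Qed.

Lemma X1_formula b F : 0 < b -> possible_forest F ->
  Xf b F 1 (fun _ => 0%nat) =
  b / (INR (din F 1) + b) * Rprod_list (map (fun v => gamma_ratio b (din F v)) (Vminus F)).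
Proof.
  intros Hb [Hnd [Hf Hnf]]. unfold Xf.
  replace (sat F 1 (fun _ => 0%nat)) with true.
  2:{ symmetry; apply sat_iff. intros e He Hle. specialize (Hf e He); lia. }
  unfold Pf, Vminus. rewrite Rprod_filter.
  rewrite (Rprod_ext (fun u => rising (INR (deg 1 (fun _ => 0%nat) u) + b) (rin F 1 u))
     (fun u => rising (INR (if 2 <=? u then 1 else 0)%nat + b) (din F u))).
  2:{ intros u _. f_equal. unfold deg, cnt. simpl. rewrite Nat.add_0_r. reflexivity.
      unfold rin, din. f_equal. apply filter_ext_in. intros e He. specialize (Hf e He).
      replace (Nat.ltb 1 (fst e)) with true. apply Bool.andb_true_r. symmetry; apply Nat.ltb_lt; lia. }
  rewrite (Rprod_ext (fun x => if 0 <? din F x then gamma_ratio b (din F x) else 1)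
       (fun x => gamma_ratio b (din F x))).
  2:{ intros x _. destruct (din F x) eqn:E; simpl; auto. }
  destruct (smax F) eqn:EM.
  - simpl. rewrite din_big by lia. simpl. unfold Rprod_list; simpl. field. lra.
  - rewrite seq_1_n by lia. rewrite !Rprod_cons. simpl (2 <=? 1). simpl (INR 0).
    rewrite Rplus_0_l, rising_b by auto.
    rewrite (Rprod_ext _ (fun x => gamma_ratio b (din F x)) (seq 2 (S n - 1))). ring.
    intros x Hx. apply in_seq in Hx. replace (2 <=? x) with true. simpl. rewrite rising_1b; auto.
    symmetry; apply Nat.leb_le; lia.
Qed.

Lemma prob_formula b F t : 0 < b -> possible_forest F -> (1 <= t)%nat -> (smax F <= t)%nat ->
  prob_sub b F t = Xf b F 1 (fun _ => 0%nat) * Rprod_list (map (Mf b F) (seq 1 (t - 1))).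
Proof.
  intros Hb HF Ht Hm. unfold prob_sub.
  rewrite (expect_ext b (t - 1) 1 _ _ (Xf b F (1 + (t - 1)))).
  apply expect_X; auto. intros i Hi; lia.
  intros h. rewrite Xf_final; auto. lia.
Qed.

Lemma exp_Rs_ln {A} (f : A -> R) l : (forall x, In x l -> 0 < f x) ->
  exp (Rs (fun x => ln (f x)) l) = Rprod_list (map f l).
Proof.
  induction l; intros H. simpl. unfold Rsum_list; simpl. apply exp_0.
  rewrite Rprod_cons. unfold Rsum_list in *. simpl. rewrite exp_plus, exp_ln, IHl; auto.
  intros; apply H; simpl; auto. apply H; simpl; auto.
Qed.

Lemma Rprod_inv {A} (f : A -> R) l : (forall x, In x l -> 0 < f x) ->
  Rprod_list (map (fun x => 1 / f x) l) * Rprod_list (map f l) = 1.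
Proof.
  induction l; intros H. unfold Rprod_list; simpl; ring.
  rewrite !Rprod_cons. assert (0 < f a) by (apply H; simpl; auto).
  replace (1 / f a * Rprod_list (map (fun x => 1 / f x) l) * (f a * Rprod_list (map f l)))
    with ((f a / f a) * (Rprod_list (map (fun x => 1 / f x) l) * Rprod_list (map f l))) by (field; lra).
  rewrite IHl. field; lra. intros; apply H; simpl; auto.
Qed.

Definition cross (e : nat * nat) (m : nat) : bool := andb (Nat.leb (snd e) m) (Nat.ltb m (fst e)).
Definition yv b F m : R := INR (cc F m) / Nn b m.
Definition tlv (F : forest) m : R := Rs (fun e => if Nat.eqb (fst e) (S m) then 1 else 0) F.
Definition Re b (e : nat * nat) : R := Rpower (Rpower (INR (fst e)) (1 + b) * INR (snd e)) (1 / (2 + b)).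
Definition Hs b (e : nat * nat) : R := Rs (fun m => 1 / Nn b m) (seq (snd e) (fst e - snd e)).
Definition bb b : R := 1 / (2 + b).

Lemma tlv_istail F m : possible_forest F -> tlv F m = if istail F (S m) then 1 else 0.
Proof.
  intros [Hnd [Hf Hnf]]. unfold tlv. destruct (istail F (S m)) eqn:E.
  - destruct (istail_true F _ E) as [w Hw]. rewrite (Rs_single _ _ (S m, w)); auto.
    simpl; rewrite Nat.eqb_refl; auto.
    intros e He Hne. destruct (Nat.eqb_spec (fst e) (S m)); auto.
    exfalso; apply Hne; eapply tail_unique; eauto.
  - rewrite (Rs_ext _ (fun _ => 0)). apply Rs_zero.
    intros e He. pose proof (istail_false F _ E e He). destruct (Nat.eqb_spec (fst e) (S m)); auto. lia.
Qed.

Lemma sum_y b F t : possible_forest F -> (smax F <= t)%nat ->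
  Rs (fun m => yv b F m) (seq 1 (t - 1)) = Rs (fun e => Hs b e) F.
Proof.
  intros [Hnd [Hf Hnf]] Ht. unfold yv, cc.
  rewrite (Rs_ext _ (fun m => Rs (fun e => if cross e m then 1 / Nn b m else 0) F)).
  2:{ intros m _. rewrite INR_count. unfold Rdiv. rewrite Rmult_comm, <- Rs_scal. apply Rs_ext.
      intros e _. unfold cross. destruct (_ && _)%bool; lra. }
  rewrite Rs_exchange. apply Rs_ext. intros e He. unfold Hs, cross.
  specialize (Hf e He). destruct (smax_ge F e He).
  rewrite (Rs_interval (fun m => 1 / Nn b m) 1 (t - 1) (snd e) (fst e)); auto; lia.
Qed.

Lemma sum_tl b F t : possible_forest F -> (smax F <= t)%nat ->
  Rs (fun m => tlv F m * ln (Nn b m)) (seq 1 (t - 1)) = Rs (fun e => ln (Nn b (fst e - 1))) F.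
Proof.
  intros [Hnd [Hf Hnf]] Ht. unfold tlv.
  rewrite (Rs_ext _ (fun m => Rs (fun e => if Nat.eqb (fst e - 1) m then ln (Nn b m) else 0) F)).
  2:{ intros m Hm. rewrite Rmult_comm, <- Rs_scal. apply Rs_ext. intros e He.
      specialize (Hf e He). apply in_seq in Hm.
      destruct (Nat.eqb_spec (fst e) (S m)); destruct (Nat.eqb_spec (fst e - 1) m); try lra; lia. }
  rewrite Rs_exchange. apply Rs_ext. intros e He. specialize (Hf e He). destruct (smax_ge F e He).
  rewrite Rs_seq_ind. replace ((1 <=? fst e - 1) && (fst e - 1 <? 1 + (t - 1)))%bool with true; auto.
  symmetry; apply Bool.andb_true_iff; rewrite Nat.leb_le, Nat.ltb_lt; lia.
Qed.

Lemma ln_Re b e : 0 < b -> (1 <= snd e)%nat -> (1 <= fst e)%nat ->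
  ln ((2 + b) * Re b e) = ln (2 + b) + bb b * ((1 + b) * ln (INR (fst e)) + ln (INR (snd e))).
Proof.
  intros Hb H1 H2. unfold Re, bb. rewrite ln_mult by (try lra; unfold Rpower; apply exp_pos).
  rewrite ln_Rpower. rewrite ln_mult. rewrite ln_Rpower. ring.
  unfold Rpower; apply exp_pos. apply lt_0_INR; lia.
Qed.

Lemma ln1p_nonneg x : 0 <= x -> 0 <= ln (1 + x).
Proof. intros H. rewrite <- ln_1. apply ln_le'; lra. Qed.

Lemma inv_le a c : 0 < a -> a <= c -> / c <= / a.
Proof. intros. apply Rinv_le_contravar; auto. Qed.

Lemma P1_bound b i : 0 < b -> (2 <= i)%nat ->
  0 <= ln ((2 + b) * INR i) - ln (Nn b (i - 1)) <= 4 * (4 + b) / b * / INR i.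
Proof.
  intros Hb Hi. assert (HI : 2 <= INR i) by (apply le_INR in Hi; simpl in Hi; lra).
  assert (HN : Nn b (i - 1) = (2 + b) * INR i - (4 + b)).
  { unfold Nn. rewrite minus_INR by lia. simpl. ring. }
  assert (HNp : b * INR i / 4 <= Nn b (i - 1)) by (rewrite HN; nra).
  assert (HNq : 0 < Nn b (i - 1)) by (assert (0 < b * INR i / 4) by (apply Rmult_lt_0_compat; [nra|lra]); lra).
  set (x := (4 + b) / Nn b (i - 1)).
  assert (Hx : 0 <= x) by (unfold x; apply Rmult_le_pos; [lra|left; apply Rinv_0_lt_compat; auto]).
  assert (Hx2 : Nn b (i - 1) * (1 + x) = Nn b (i - 1) + (4 + b)) by (unfold x; field; lra).
  replace ((2 + b) * INR i) with (Nn b (i - 1) * (1 + x)) by (rewrite Hx2, HN; ring).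
  rewrite ln_mult by lra.
  replace (ln (Nn b (i - 1)) + ln (1 + x) - ln (Nn b (i - 1))) with (ln (1 + x)) by ring.
  split. apply ln1p_nonneg; auto.
  eapply Rle_trans. apply ln1p_upper; auto. unfold x.
  replace (4 * (4 + b) / b * / INR i) with ((4 + b) * / (b * INR i / 4)) by (field; lra).
  unfold Rdiv. apply Rmult_le_compat_l. lra. apply inv_le; auto. apply Rmult_lt_0_compat; [nra|lra].
Qed.

Definition tau b m : R := 1 / Nn b m - bb b * (ln (INR (S m)) - ln (INR m)).

Lemma tau_bound b m : 0 < b -> (1 <= m)%nat ->
  0 <= tau b m <= (1 + 4 / b) * (/ INR m - / INR (S m)).
Proof.
  intros Hb Hm. assert (HM : 1 <= INR m) by (apply le_INR in Hm; simpl in Hm; lra).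
  unfold tau. rewrite S_INR. set (M := INR m) in *.
  assert (HN : Nn b m = (2 + b) * M - 2) by reflexivity.
  assert (HNp : b * M / 2 <= Nn b m) by (rewrite HN; nra).
  assert (HNq : 0 < Nn b m) by (assert (0 < b * M / 2) by nra; lra).
  set (x := / M).
  assert (Hx : 0 < x) by (unfold x; apply Rinv_0_lt_compat; lra).
  replace (M + 1) with (M * (1 + x)) by (unfold x; field; lra).
  rewrite ln_mult by lra.
  replace (ln M + ln (1 + x) - ln M) with (ln (1 + x)) by ring.
  pose proof (ln1p_upper x ltac:(lra)). pose proof (ln1p_lower x ltac:(lra)).
  assert (Hbb : 0 < bb b <= 1 / 2) by (unfold bb; split; [apply Rdiv_lt_0_compat; lra|];
     apply Rmult_le_reg_r with (2 + b); [lra|]; unfold Rdiv; rewrite Rmult_assoc, Rinv_l by lra; lra).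
  assert (Hd : 1 / Nn b m - bb b * x = 2 / (Nn b m * (2 + b) * M)).
  { rewrite HN. unfold bb, x. field. rewrite <- HN. repeat split; lra. }
  assert (Hd2 : 2 / (Nn b m * (2 + b) * M) <= 2 / b * (x * x)).
  { unfold x. replace (2 / b * (/ M * / M)) with (2 * / (b * M * M)) by (field; lra).
    unfold Rdiv. apply Rmult_le_compat_l. lra. apply inv_le.
    apply Rmult_lt_0_compat; [apply Rmult_lt_0_compat|]; lra.
    assert (b * M <= Nn b m * (2 + b)) by (rewrite HN; nra).
    apply Rmult_le_compat_r; lra. }
  assert (Hd3 : 0 <= 2 / (Nn b m * (2 + b) * M)).
  { unfold Rdiv. apply Rmult_le_pos. lra. left; apply Rinv_0_lt_compat. nra. }
  assert (Htel : x * x <= 2 * (x - / (M * (1 + x)))).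
  { unfold x. replace (2 * (/ M - / (M * (1 + / M)))) with (2 * (/ M * / (M + 1))) by (field; lra).
    assert (0 < / (M + 1)) by (apply Rinv_0_lt_compat; lra).
    assert (/ M <= 2 * / (M + 1)).
    { apply Rmult_le_reg_r with (M * (M + 1)). nra.
      replace (/ M * (M * (M + 1))) with (M + 1) by (field; lra).
      replace (2 * / (M + 1) * (M * (M + 1))) with (2 * M) by (field; lra). lra. }
    assert (0 < / M) by (apply Rinv_0_lt_compat; lra).
    replace (2 * (/ M * / (M + 1))) with (/ M * (2 * / (M + 1))) by ring.
    apply Rmult_le_compat_l; lra. }
  fold x. split.
  - assert (bb b * ln (1 + x) <= bb b * x) by (apply Rmult_le_compat_l; lra). lra.
  - assert (bb b * (x - x * x) <= bb b * ln (1 + x)) by (apply Rmult_le_compat_l; lra).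
    assert (bb b * (x * x) <= / 2 * (x * x)) by (apply Rmult_le_compat_r; nra).
    assert (0 < / b) by (apply Rinv_0_lt_compat; lra).
    replace (4 / b) with (4 * / b) by reflexivity. replace (2 / b) with (2 * / b) in Hd2 by reflexivity.
    nra.
Qed.

Lemma P2_eq b e : (snd e <= fst e)%nat ->
  Hs b e - bb b * (ln (INR (fst e)) - ln (INR (snd e))) = Rs (tau b) (seq (snd e) (fst e - snd e)).
Proof.
  intros H. unfold Hs, tau. rewrite Rs_minus, Rs_scal.
  rewrite (Rs_telescope (fun m => ln (INR m))). replace (snd e + (fst e - snd e))%nat with (fst e) by lia.
  reflexivity.
Qed.

Lemma tel_inv a n : Rs (fun m => / INR m - / INR (S m)) (seq a n) = / INR a - / INR (a + n).
Proof.
  revert a; induction n; intros a. simpl. rewrite Nat.add_0_r. unfold Rsum_list; simpl; ring.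
  cbn [seq map]. unfold Rsum_list in *. cbn [fold_right]. rewrite IHn.
  replace (S a + n)%nat with (a + S n)%nat by lia. ring.
Qed.

Lemma P2_bound b e : 0 < b -> (1 <= snd e)%nat -> (snd e <= fst e)%nat ->
  0 <= Rs (tau b) (seq (snd e) (fst e - snd e)) <= (1 + 4 / b) * / INR (snd e).
Proof.
  intros Hb H1 H2. split.
  - apply Rs_nonneg. intros m Hm; apply in_seq in Hm. apply tau_bound; auto; lia.
  - eapply Rle_trans. apply Rs_le with (g := fun m => (1 + 4 / b) * (/ INR m - / INR (S m))).
    intros m Hm; apply in_seq in Hm. apply tau_bound; auto; lia.
    rewrite Rs_scal. apply Rmult_le_compat_l.
    assert (0 < 4 / b) by (apply Rdiv_lt_0_compat; lra). lra.
    rewrite tel_inv. replace (snd e + (fst e - snd e))%nat with (fst e) by lia.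
    assert (0 < / INR (fst e)) by (apply Rinv_0_lt_compat, lt_0_INR; lia). lra.
Qed.

Definition K1 b : R := 4 * (4 + b) / b + (1 + 4 / b).

Lemma edge_bound b e : 0 < b -> (1 <= snd e)%nat -> (snd e < fst e)%nat ->
  Rabs (Hs b e - ln (Nn b (fst e - 1)) + ln ((2 + b) * Re b e)) <= K1 b * / INR (snd e).
Proof.
  intros Hb H1 H2. rewrite ln_Re by (auto; lia).
  replace (Hs b e - ln (Nn b (fst e - 1)) +
     (ln (2 + b) + bb b * ((1 + b) * ln (INR (fst e)) + ln (INR (snd e)))))
   with ((ln ((2 + b) * INR (fst e)) - ln (Nn b (fst e - 1))) +
         (Hs b e - bb b * (ln (INR (fst e)) - ln (INR (snd e))))).
  2:{ rewrite ln_mult. unfold bb. field. lra. lra. apply lt_0_INR; lia. }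
  rewrite P2_eq by lia.
  pose proof (P1_bound b (fst e) Hb ltac:(lia)). pose proof (P2_bound b e Hb H1 ltac:(lia)).
  assert (/ INR (fst e) <= / INR (snd e)).
  { apply inv_le. apply lt_0_INR; lia. apply le_INR; lia. }
  assert (0 < 4 * (4 + b) / b) by (apply Rdiv_lt_0_compat; lra).
  assert (4 * (4 + b) / b * / INR (fst e) <= 4 * (4 + b) / b * / INR (snd e)) by (apply Rmult_le_compat_l; lra).
  rewrite Rabs_right by lra. unfold K1. lra.
Qed.

Lemma div_nonneg a c : 0 <= a -> 0 < c -> 0 <= a / c.
Proof. intros; unfold Rdiv; apply Rmult_le_pos; auto; left; apply Rinv_0_lt_compat; auto. Qed.

Definition W (e e' : nat * nat) : R :=
  let mu := Nat.max (snd e) (snd e') in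
  if andb (Nat.leb 1 mu) (Nat.ltb mu (Nat.min (fst e) (fst e'))) then / INR mu else 0.

Definition DS (F : forest) : R := Rs (fun e => Rs (fun e' => W e e') F) F.

Lemma W_nonneg e e' : 0 <= W e e'.
Proof. unfold W. destruct (Nat.leb_spec 1 (Nat.max (snd e) (snd e'))); simpl; [|lra].
  destruct (Nat.ltb _ _); [|lra]. left; apply Rinv_0_lt_compat, lt_0_INR; lia. Qed.

Lemma W_val e e' : (1 <= Nat.max (snd e) (snd e') < Nat.min (fst e) (fst e'))%nat ->
  W e e' = / INR (Nat.max (snd e) (snd e')).
Proof. intros H. unfold W. replace (andb _ _) with true; auto.
  symmetry; apply Bool.andb_true_iff; rewrite Nat.leb_le, Nat.ltb_lt; lia. Qed.

Lemma DS_nonneg F : 0 <= DS F.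
Proof. apply Rs_nonneg; intros; apply Rs_nonneg; intros; apply W_nonneg. Qed.

Lemma Nn_inv_bound b m : 0 < b -> (1 <= m)%nat -> / Nn b m <= (2 / b) * / INR m.
Proof.
  intros Hb Hm. pose proof (Nn_lower b m Hb Hm). assert (1 <= INR m) by (apply le_INR in Hm; simpl in Hm; lra).
  replace (2 / b * / INR m) with (/ (b * INR m / 2)) by (field; repeat split; lra).
  apply inv_le; auto. nra.
Qed.

Lemma Rs_mult {A B} (f : A -> R) (g : B -> R) l l' :
  Rs f l * Rs g l' = Rs (fun x => Rs (fun y => f x * g y) l') l.
Proof.
  induction l; simpl. unfold Rsum_list; simpl; ring.
  unfold Rsum_list in *; simpl. rewrite Rmult_plus_distr_r, IHl. f_equal.
  fold (Rsum_list (map g l')). rewrite <- Rs_scal. reflexivity.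
Qed.

Definition ind (p : bool) : R := if p then 1 else 0.

Lemma yv_sum b F m : yv b F m = Rs (fun e => ind (cross e m) * / Nn b m) F.
Proof. unfold yv, cc. rewrite INR_count. unfold Rdiv. rewrite Rmult_comm, <- Rs_scal.
  apply Rs_ext; intros e _. unfold ind, cross. destruct (_ && _)%bool; ring. Qed.

Lemma pair_bound b t e e' : 0 < b -> (1 <= snd e)%nat -> (1 <= snd e')%nat ->
  (fst e <= t)%nat -> (fst e' <= t)%nat ->
  Rs (fun m => ind (cross e m) * ind (cross e' m) * (/ Nn b m * / Nn b m)) (seq 1 (t - 1))
  <= 8 / (b * b) * W e e'.
Proof.
  intros Hb H1 H2 H3 H4.
  set (mu := Nat.max (snd e) (snd e')). set (nu := Nat.min (fst e) (fst e')).
  rewrite (Rs_ext _ (fun m => if andb (Nat.leb mu m) (Nat.ltb m nu) then / Nn b m * / Nn b m else 0)).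
  2:{ intros m _. unfold ind, cross, mu, nu.
      destruct (Nat.leb_spec (snd e) m); destruct (Nat.ltb_spec m (fst e));
      destruct (Nat.leb_spec (snd e') m); destruct (Nat.ltb_spec m (fst e'));
      destruct (Nat.leb_spec (Nat.max (snd e) (snd e')) m); destruct (Nat.ltb_spec m (Nat.min (fst e) (fst e')));
      simpl; try ring; exfalso; lia. }
  destruct (Nat.ltb_spec mu nu).
  - rewrite Rs_interval by lia. rewrite W_val by (fold mu nu; lia). fold mu.
    eapply Rle_trans. apply Rs_le with (g := fun m => 8 / (b * b) * (/ INR m - / INR (S m))).
    + intros m Hm; apply in_seq in Hm.
      assert (HM : 1 <= INR m) by (assert (1 <= m)%nat by lia; apply le_INR in H0; simpl in H0; lra).
      pose proof (Nn_inv_bound b m Hb ltac:(lia)). pose proof (Nn_pos b m Hb ltac:(lia)).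
      assert (0 < / Nn b m) by (apply Rinv_0_lt_compat; auto).
      assert (Hp : / Nn b m * / Nn b m <= (2 / b * / INR m) * (2 / b * / INR m)) by (apply Rmult_le_compat; lra).
      assert (Hinv : / INR m * / INR m <= 2 * (/ INR m - / INR (S m))).
      { rewrite S_INR. replace (2 * (/ INR m - / (INR m + 1))) with (/ INR m * (2 * / (INR m + 1))) by (field; repeat split; lra).
        assert (0 < / INR m) by (apply Rinv_0_lt_compat; lra).
        apply Rmult_le_compat_l. lra. apply Rmult_le_reg_r with (INR m * (INR m + 1)). nra.
        replace (/ INR m * (INR m * (INR m + 1))) with (INR m + 1) by (field; repeat split; lra).
        replace (2 * / (INR m + 1) * (INR m * (INR m + 1))) with (2 * INR m) by (field; repeat split; lra). lra. }
      replace (2 / b * / INR m * (2 / b * / INR m)) with (4 / (b * b) * (/ INR m * / INR m)) in Hp by (field; repeat split; lra).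
      replace (8 / (b * b) * (/ INR m - / INR (S m))) with (4 / (b * b) * (2 * (/ INR m - / INR (S m)))) by (unfold Rdiv; ring).
      eapply Rle_trans; [apply Hp|]. apply Rmult_le_compat_l; auto.
      apply div_nonneg; [lra|nra].
    + rewrite Rs_scal, tel_inv. apply Rmult_le_compat_l. apply div_nonneg; [lra|nra].
      replace (mu + (nu - mu))%nat with nu by lia.
      assert (0 < / INR nu) by (apply Rinv_0_lt_compat, lt_0_INR; lia). lra.
  - rewrite (Rs_ext _ (fun _ => 0)). rewrite Rs_zero. apply Rmult_le_pos. apply div_nonneg; [lra|nra].
    apply W_nonneg. intros m _. destruct (Nat.leb_spec mu m); destruct (Nat.ltb_spec m nu); simpl; auto; lia.
Qed.

Lemma sum_y2 b F t : 0 < b -> possible_forest F -> (smax F <= t)%nat ->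
  Rs (fun m => yv b F m * yv b F m) (seq 1 (t - 1)) <= 8 / (b * b) * DS F.
Proof.
  intros Hb [Hnd [Hf Hnf]] Ht.
  rewrite (Rs_ext _ (fun m => Rs (fun e => Rs (fun e' => ind (cross e m) * ind (cross e' m) * (/ Nn b m * / Nn b m)) F) F)).
  2:{ intros m _. rewrite !yv_sum, Rs_mult. apply Rs_ext; intros; apply Rs_ext; intros; ring. }
  rewrite Rs_exchange. unfold DS. rewrite <- Rs_scal. apply Rs_le. intros e He.
  rewrite Rs_exchange. rewrite <- Rs_scal. apply Rs_le. intros e' He'.
  destruct (Hf e He), (Hf e' He'), (smax_ge F e He), (smax_ge F e' He').
  apply pair_bound; auto; lia.
Qed.

Lemma sum_tly b F t : 0 < b -> possible_forest F -> (smax F <= t)%nat ->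
  Rs (fun m => tlv F m * yv b F m) (seq 1 (t - 1)) <= 2 / b * DS F.
Proof.
  intros Hb [Hnd [Hf Hnf]] Ht. unfold tlv.
  rewrite (Rs_ext _ (fun m => Rs (fun e' => if Nat.eqb (fst e' - 1) m then yv b F m else 0) F)).
  2:{ intros m Hm. apply in_seq in Hm. rewrite Rmult_comm, <- Rs_scal. apply Rs_ext. intros e' He'.
      specialize (Hf e' He').
      destruct (Nat.eqb_spec (fst e') (S m)); destruct (Nat.eqb_spec (fst e' - 1) m); try ring; lia. }
  rewrite Rs_exchange. unfold DS. rewrite (Rs_exchange (fun e e' => W e e') F F), <- Rs_scal. apply Rs_le. intros e' He'.
  destruct (Hf e' He'). destruct (smax_ge F e' He').
  rewrite Rs_seq_ind. replace ((1 <=? fst e' - 1) && (fst e' - 1 <? 1 + (t - 1)))%bool with true.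
  2:{ symmetry; apply Bool.andb_true_iff; rewrite Nat.leb_le, Nat.ltb_lt; lia. }
  rewrite yv_sum, <- Rs_scal. apply Rs_le. intros e He. destruct (Hf e He).
  unfold ind, cross. destruct (Nat.leb_spec (snd e) (fst e' - 1)); destruct (Nat.ltb_spec (fst e' - 1) (fst e)); simpl;
  try (rewrite Rmult_0_l; apply Rmult_le_pos; [apply div_nonneg; lra|apply W_nonneg]).
  rewrite W_val by lia. rewrite Rmult_1_l.
  eapply Rle_trans. apply Nn_inv_bound; auto; lia.
  apply Rmult_le_compat_l. apply div_nonneg; lra.
  apply inv_le. apply lt_0_INR; lia. apply le_INR; lia.
Qed.

Definition delta b F m : R := ln (Mf b F m) - yv b F m + tlv F m * ln (Nn b m).

Lemma yv_nonneg b F m : 0 < b -> (1 <= m)%nat -> 0 <= yv b F m.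
Proof. intros. unfold yv. apply div_nonneg. apply pos_INR. apply Nn_pos; auto. Qed.

Lemma delta_bound b F m : 0 < b -> possible_forest F -> (1 <= m)%nat ->
  Rabs (delta b F m) <= yv b F m * yv b F m + tlv F m * yv b F m.
Proof.
  intros Hb HF Hm. pose proof (yv_nonneg b F m Hb Hm) as Hy. pose proof (Nn_pos b m Hb Hm).
  unfold delta. rewrite tlv_istail by auto. unfold Mf. destruct (istail F (S m)).
  - unfold Rdiv. rewrite Rmult_1_l, ln_Rinv by auto.
    replace (- ln (Nn b m) - yv b F m + 1 * ln (Nn b m)) with (- yv b F m) by ring.
    rewrite Rabs_Ropp, Rabs_right by lra. nra.
  - fold (yv b F m). pose proof (ln1p_upper _ Hy). pose proof (ln1p_lower _ Hy).
    rewrite Rabs_left1 by lra. lra.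
Qed.

Lemma diag_bound F : possible_forest F -> Rs (fun e => / INR (snd e)) F <= DS F.
Proof.
  intros [Hnd [Hf Hnf]]. unfold DS. apply Rs_le. intros e He.
  eapply Rle_trans; [|apply (Rs_elem (fun e' => W e e') F e He)].
  - rewrite W_val. rewrite Nat.max_id; lra. destruct (Hf e He). rewrite Nat.max_id, Nat.min_id; lia.
  - intros; apply W_nonneg.
Qed.

Definition Ebig b F t : R :=
  Rs (fun m => ln (Mf b F m)) (seq 1 (t - 1)) + Rs (fun e => ln ((2 + b) * Re b e)) F.

Definition Cst b : R := K1 b + 8 / (b * b) + 2 / b.

Lemma Ebig_bound b F t : 0 < b -> possible_forest F -> (smax F <= t)%nat ->
  Rabs (Ebig b F t) <= Cst b * DS F.
Proof.
  intros Hb HF Ht. unfold Ebig.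
  rewrite (Rs_ext (fun m => ln (Mf b F m)) (fun m => delta b F m + yv b F m - tlv F m * ln (Nn b m)))
    by (intros; unfold delta; ring).
  rewrite Rs_minus, Rs_plus, sum_y, sum_tl by auto.
  replace (Rs (delta b F) (seq 1 (t - 1)) + Rs (fun e => Hs b e) F -
           Rs (fun e => ln (Nn b (fst e - 1))) F + Rs (fun e => ln ((2 + b) * Re b e)) F)
    with (Rs (delta b F) (seq 1 (t - 1)) +
          Rs (fun e => Hs b e - ln (Nn b (fst e - 1)) + ln ((2 + b) * Re b e)) F)
    by (rewrite (Rs_plus (fun e => Hs b e - ln (Nn b (fst e - 1))) (fun e => ln ((2 + b) * Re b e))),
          (Rs_minus (fun e => Hs b e) (fun e => ln (Nn b (fst e - 1)))); ring).
  eapply Rle_trans. apply Rabs_triang.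
  assert (A1 : Rabs (Rs (delta b F) (seq 1 (t - 1))) <= (8 / (b * b) + 2 / b) * DS F).
  { eapply Rle_trans. apply Rs_abs.
    eapply Rle_trans. apply Rs_le with (g := fun m => yv b F m * yv b F m + tlv F m * yv b F m).
    intros m Hm; apply in_seq in Hm. apply delta_bound; auto; lia.
    rewrite Rs_plus. pose proof (sum_y2 b F t Hb HF Ht). pose proof (sum_tly b F t Hb HF Ht). lra. }
  assert (A2 : Rabs (Rs (fun e => Hs b e - ln (Nn b (fst e - 1)) + ln ((2 + b) * Re b e)) F) <= K1 b * DS F).
  { eapply Rle_trans. apply Rs_abs.
    eapply Rle_trans. apply Rs_le with (g := fun e => K1 b * / INR (snd e)).
    intros e He. destruct HF as [_ [Hf _]]. destruct (Hf e He). apply edge_bound; auto; lia.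
    rewrite Rs_scal. apply Rmult_le_compat_l. unfold K1.
    assert (0 < 4 * (4 + b) / b) by (apply Rdiv_lt_0_compat; lra).
    assert (0 < 4 / b) by (apply Rdiv_lt_0_compat; lra). lra.
    apply diag_bound; auto. }
  replace (Cst b * DS F) with (K1 b * DS F + (8 / (b * b) + 2 / b) * DS F) by (unfold Cst; ring). lra.
Qed.

Lemma head_min (p : nat -> bool) n : forall a x, In x (filter p (seq a n)) ->
  (nth O (filter p (seq a n)) O <= x)%nat.
Proof.
  induction n; intros a x H; simpl in *. contradiction.
  destruct (p a) eqn:E.
  - simpl. simpl in H. destruct H as [<-|H]; [lia|].
    apply filter_In in H. destruct H as [H _]. apply in_seq in H. lia.
  - apply IHn; auto.
Qed.

Lemma inV_edge F e : In e F -> inV F (fst e) = true /\ inV F (snd e) = true.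
Proof.
  intros He. unfold inV. split; apply existsb_exists; exists e; split; auto;
  apply Bool.orb_true_iff; [left|right]; apply Nat.eqb_eq; auto.
Qed.

Definition Xv (v : nat) (e : nat * nat) : bool := andb (Nat.leb v (fst e)) (Nat.ltb (snd e) v).

Lemma cS_sq F v : INR (cS F v) ^ 2 = Rs (fun e => Rs (fun e' => ind (Xv v e) * ind (Xv v e')) F) F.
Proof.
  unfold cS. rewrite INR_count. simpl. rewrite Rmult_1_r, Rs_mult. reflexivity.
Qed.

Lemma pair_err F e e' : possible_forest F -> In e F -> In e' F ->
  W e e' <= Rs (fun r => ind (Xv (nth r (verts F) O) e) * ind (Xv (nth r (verts F) O) e') / INR r)
                (seq 1 (length (verts F) - 1)).
Proof.
  intros [Hnd [Hf Hnf]] He He'.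
  assert (Hnn : forall r, In r (seq 1 (length (verts F) - 1)) ->
     0 <= ind (Xv (nth r (verts F) O) e) * ind (Xv (nth r (verts F) O) e') / INR r).
  { intros r Hr; apply in_seq in Hr. apply div_nonneg. unfold ind; destruct (Xv _ e), (Xv _ e'); lra.
    apply lt_0_INR; lia. }
  set (mu := Nat.max (snd e) (snd e')). set (nu := Nat.min (fst e) (fst e')).
  destruct (Hf e He), (Hf e' He'). destruct (smax_ge F e He), (smax_ge F e' He').
  destruct (Nat.ltb_spec mu nu).
  2:{ unfold W. fold mu nu. replace (Nat.ltb mu nu) with false by (symmetry; apply Nat.ltb_ge; lia).
      rewrite Bool.andb_false_r. apply Rs_nonneg; auto. }
  rewrite W_val by (fold mu nu; lia). fold mu.
  set (M := smax F).
  set (l1 := filter (inV F) (seq 1 mu)). set (l2 := filter (inV F) (seq (1 + mu) (M - mu))).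
  assert (Hv : verts F = l1 ++ l2).
  { unfold verts, l1, l2. fold M. replace M with (mu + (M - mu))%nat at 1 by lia.
    rewrite seq_app, filter_app. reflexivity. }
  set (r0 := length l1).
  assert (Hmu_in : In mu l1).
  { unfold l1. apply filter_In. split. apply in_seq; lia.
    unfold mu. destruct (Nat.max_spec (snd e) (snd e')) as [[_ ->]|[_ ->]].
    apply (inV_edge F e' He'). apply (inV_edge F e He). }
  assert (Hi_in : In (fst e) l2).
  { unfold l2. apply filter_In. split. apply in_seq; lia. apply (inV_edge F e He). }
  assert (Hi'_in : In (fst e') l2).
  { unfold l2. apply filter_In. split. apply in_seq; lia. apply (inV_edge F e' He'). }
  assert (Hr0 : (1 <= r0)%nat) by (unfold r0; destruct l1; [contradiction|simpl; lia]).
  assert (Hr0mu : (r0 <= mu)%nat).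
  { unfold r0, l1. rewrite <- (length_seq mu 1) at 2. apply filter_length_le. }
  assert (Hl2 : (1 <= length l2)%nat) by (destruct l2; [contradiction|simpl; lia]).
  set (h := nth O l2 O).
  assert (Hnth : nth r0 (verts F) O = h).
  { rewrite Hv. unfold r0. rewrite app_nth2 by lia. rewrite Nat.sub_diag. reflexivity. }
  assert (Hh_in : In h l2) by (unfold h; apply nth_In; lia).
  assert (Hh1 : (1 + mu <= h)%nat).
  { unfold l2 in Hh_in. apply filter_In in Hh_in. destruct Hh_in as [Hh _]. apply in_seq in Hh; lia. }
  assert (Hh2 : (h <= fst e)%nat) by (unfold h, l2; apply head_min; auto).
  assert (Hh3 : (h <= fst e')%nat) by (unfold h, l2; apply head_min; auto).
  eapply Rle_trans; [|apply (Rs_elem _ _ r0); auto].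
  - cbv beta. rewrite Hnth. unfold ind, Xv.
    replace (Nat.leb h (fst e) && Nat.ltb (snd e) h)%bool with true.
    replace (Nat.leb h (fst e') && Nat.ltb (snd e') h)%bool with true.
    rewrite Rmult_1_l. unfold Rdiv. rewrite Rmult_1_l. apply inv_le. apply lt_0_INR; lia. apply le_INR; lia.
    symmetry; apply Bool.andb_true_iff; rewrite Nat.leb_le, Nat.ltb_lt; unfold mu in *; lia.
    symmetry; apply Bool.andb_true_iff; rewrite Nat.leb_le, Nat.ltb_lt; unfold mu in *; lia.
  - apply in_seq. rewrite Hv, length_app. fold r0. lia.
Qed.

Lemma DS_err F : possible_forest F -> DS F <= err_sum F.
Proof.
  intros HF. unfold err_sum.
  rewrite (Rs_ext _ (fun r => Rs (fun e => Rs (fun e' => ind (Xv (nth r (verts F) O) e) * ind (Xv (nth r (verts F) O) e') / INR r) F) F)).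
  2:{ intros r _. rewrite cS_sq. unfold Rdiv. rewrite Rmult_comm, <- Rs_scal. apply Rs_ext; intros e _.
      rewrite <- Rs_scal. apply Rs_ext; intros; ring. }
  rewrite Rs_exchange. unfold DS. apply Rs_le. intros e He.
  rewrite Rs_exchange. apply Rs_le. intros e' He'. apply pair_err; auto.
Qed.

Lemma Mf_pos b F m : 0 < b -> (1 <= m)%nat -> 0 < Mf b F m.
Proof.
  intros Hb Hm. pose proof (Nn_pos b m Hb Hm). unfold Mf. destruct (istail F (S m)).
  apply Rdiv_lt_0_compat; lra. pose proof (yv_nonneg b F m Hb Hm). unfold yv in H0. lra.
Qed.

Lemma Cst_nonneg b : 0 < b -> 0 <= Cst b.
Proof.
  intros Hb. unfold Cst, K1.
  assert (0 < 4 * (4 + b) / b) by (apply Rdiv_lt_0_compat; lra).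
  assert (0 < 4 / b) by (apply Rdiv_lt_0_compat; lra).
  assert (0 < 2 / b) by (apply Rdiv_lt_0_compat; lra).
  assert (0 < 8 / (b * b)) by (apply Rdiv_lt_0_compat; nra). lra.
Qed.

Theorem lemma2 (beta : R) (Hbeta : 0 < beta) :
  exists C : R,
    forall (S : forest) (t : nat),
      possible_forest S ->
      (1 <= t)%nat ->
      (smax S <= t)%nat ->
      exists E : R,
        Rabs E <= C * err_sum S /\
        prob_sub beta S t = main_term beta S * exp E.
Proof.
  exists (Cst beta). intros F t HF Ht Hm. exists (Ebig beta F t). split.
  - eapply Rle_trans. apply Ebig_bound; auto. apply Rmult_le_compat_l. apply Cst_nonneg; auto.
    apply DS_err; auto.
  - rewrite prob_formula, X1_formula by auto. unfold main_term, Ebig. rewrite exp_plus.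
    rewrite (exp_Rs_ln (Mf beta F)).
    2:{ intros m Hm'; apply in_seq in Hm'. apply Mf_pos; auto; lia. }
    rewrite (exp_Rs_ln (fun e => (2 + beta) * Re beta e)).
    2:{ intros e _. apply Rmult_lt_0_compat. lra. unfold Re, Rpower. apply exp_pos. }
    pose proof (Rprod_inv (fun e => (2 + beta) * Re beta e) F) as Hinv.
    set (P := Rprod_list (map (fun e => 1 / ((2 + beta) * Rpower (Rpower (INR (fst e)) (1 + beta) * INR (snd e)) (1 / (2 + beta)))) F)).
    set (Q := Rprod_list (map (fun e => (2 + beta) * Re beta e) F)).
    assert (HPQ : P * Q = 1).
    { apply Hinv. intros e _. apply Rmult_lt_0_compat. lra. unfold Re, Rpower. apply exp_pos. }
    set (A := beta / (INR (din F 1) + beta)).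
    set (B := Rprod_list (map (fun v : nat => gamma_ratio beta (din F v)) (Vminus F))).
    set (Mp := Rprod_list (map (Mf beta F) (seq 1 (t - 1)))).
    replace (A * B * P * (Mp * Q)) with (A * B * Mp * (P * Q)) by ring. rewrite HPQ. ring.
Qed.
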